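(* Let $\epsilon>0$ and let $u^1,u^2$ be smooth functions on $[0,1]^2$; denote also by $u^1,u^2$ their restrictions to the grid $(x_i,y_j)=(i\Delta x,j\Delta y)$, $i=0,\dots,N-1$, $j=0,\dots,M-1$, $(N-1)\Delta x=(M-1)\Delta y=1$. Let $D_x=P_x^{-1}Q_x$, $D_y=P_y^{-1}Q_y$ be summation-by-parts operators with $P_x=\Delta x\,\mathrm{diag}(p^x_0,\dots,p^x_{N-1})$, $P_y=\Delta y\,\mathrm{diag}(p^y_0,\dots,p^y_{M-1})$, positive entries, $Q_x+Q_x^T=R_N-L_N$, $Q_y+Q_y^T=R_M-L_M$; assume moreover that for every smooth $\bar u$ with grid restriction $u$ and every grid function $w$, $\|D_x(u\circ w)-u\circ D_xw\|_{P_x}\le C_0\|\partial_x\bar u\|_{L^\infty}\|w\|_{P_x}$ (and analogously in $y$), with $C_0$ independent of the grid. Let $\mathbf V(t)=(V^1,V^2)$ solve the semi-discrete scheme with mixed boundary treatment and homogeneous data ($\mathbf g=\mathbf h=0$): $$ \mathbf V_t+u^1\circ\mathfrak{d}_x\mathbf V+u^2\circ\mathfrak{d}_y\mathbf V-C\mathbf V+\epsilon\,\mathfrak{curl}^2(\mathbf V)=\mathcal B\mathbf V+\epsilon\begin{pmatrix}(\mathcal U-\mathcal D)(I_N\otimes P_y^{-1})\,\mathfrak{curl}(\mathbf V)\\ -(\mathcal R-\mathcal L)(P_x^{-1}\otimes I_M)\,\mathfrak{curl}(\mathbf V)\end{pmatrix},\quad t>0, $$ where $C=\begin{pmatrix}-\mathfrak{d}_yu^2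 & \mathfrak{d}_yu^1\\ \mathfrak{d}_xu^2 & -\mathfrak{d}_xu^1\end{pmatrix}$ (entries acting by componentwise multiplication) and $\mathcal B=(P_x^{-1}\otimes I_M)(\Sigma_{\mathcal L}\mathcal L+\Sigma_{\mathcal R}\mathcal R)+(I_N\otimes P_y^{-1})(\Sigma_{\mathcal D}\mathcal D+\Sigma_{\mathcal U}\mathcal U)$ with diagonal penalty matrices (entries $(\sigma_{\mathcal K})_{i,j}$) chosen so that $$(\sigma_{\mathcal R})_{N-1,j}\le \tfrac{u^{1,-}(1,y_j)}{2},\quad (\sigma_{\mathcal L})_{0,j}\le-\tfrac{u^{1,+}(0,y_j)}{2},\quad (\sigma_{\mathcal U})_{i,M-1}\le\tfrac{u^{2,-}(x_i,1)}{2},\quad (\sigma_{\mathcal D})_{i,0}\le-\tfrac{u^{2,+}(x_i,0)}{2}.$$ Then $$\|\mathbf V(t)\|_{\mathbf P}^2+\epsilon\int_0^t e^{c(t-s)}\|\mathfrak{curl}(\mathbf V(s))\|_{\mathbf P}^2\,ds\le e^{ct}\|\mathbf V(0)\|_{\mathbf P}^2,$$ where $c$ is a constant depending on $\mathfrak{d}_x,\mathfrak{d}_y$ and the derivatives of $u^1,u^2$, but not on $N$ or $M$.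
   Context: $R_n=\mathrm{diag}(0,\dots,0,1)$, $L_n=\mathrm{diag}(1,0,\dots,0)$ ($n\times n$), $I_n$ identity, $\otimes$ Kronecker product. $\mathfrak{d}_x=D_x\otimes I_M$, $\mathfrak{d}_y=I_N\otimes D_y$, $\mathbf P=P_x\otimes P_y$, $\mathcal R=R_N\otimes I_M$, $\mathcal L=L_N\otimes I_M$, $\mathcal U=I_N\otimes R_M$, $\mathcal D=I_N\otimes L_M$. Grid functions are ordered as $(w_{0,0},w_{0,1},\dots,w_{0,M-1},w_{1,0},\dots,w_{N-1,M-1})^T$; $(u\circ w)_k=u_kw_k$; $\|w\|_{P_x}=(w^TP_xw)^{1/2}$. $(v,w)_{\mathbf P}=v^T\mathbf Pw$, $\|w\|_{\mathbf P}=(w,w)_{\mathbf P}^{1/2}$; for vector grid functions $(\mathbf V,\mathbf W)_{\mathbf P}=(V^1,W^1)_{\mathbf P}+(V^2,W^2)_{\mathbf P}$, and operators and $\mathcal B$ act componentwise. $\mathfrak{curl}(\mathbf V)=\mathfrak{d}_xV^2-\mathfrak{d}_yV^1$, $\mathfrak{curl}^2(\mathbf V)=(-\mathfrak{d}_{yy}V^1+\mathfrak{d}_{xy}V^2,\ \mathfrak{d}_{xy}V^1-\mathfrak{d}_{xx}V^2)$ with $\mathfrak{d}_{xy}=\mathfrak{d}_x\mathfrak{d}_y$, etc. $u^{l,+}=\max(u^l,0)$, $u^{l,-}=\min(u^l,0)$. *)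

(* Defs.v *)
From HB Require Import structures.
From mathcomp Require Import all_boot all_order all_algebra.
From mathcomp Require Import all_classical all_reals all_analysis.
Set Implicit Arguments. Unset Strict Implicit. Unset Printing Implicit Defensive.
Import Order.TTheory GRing.Theory Num.Theory.
Import numFieldNormedType.Exports.
Local Open Scope classical_set_scope.
Local Open Scope ring_scope.

Section Defs.
Variable R : realType.

Definition smooth1 (f : R -> R) : Prop :=
  forall (n : nat) (x : R), derivable (iter n (@derive1 R R) f) x 1.

Definition pdx (f : R -> R -> R) : R -> R -> R :=
  fun x y => derive1 (fun s => f s y) x.
Definition pdy (f : R -> R -> R) : R -> R -> R :=
  fun x y => derive1 (fun s => f x s) y.

Fixpoint iterpd (l : seq bool) (f : R -> R -> R) : R -> R -> R :=
  match l with
  | [::] => f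
  | b :: l' => if b then pdx (iterpd l' f) else pdy (iterpd l' f)
  end.

Definition smooth2 (f : R -> R -> R) : Prop :=
  forall l : seq bool,
    (forall x y, derivable (fun s => iterpd l f s y) x 1 /\
                 derivable (fun s => iterpd l f x s) y 1) /\
    continuous (fun p : R * R => iterpd l f p.1 p.2).

Definition Rmat (n : nat) : 'M[R]_n := \matrix_(i, k) ((i == k) && (i == n.-1 :> nat))%:R.
Definition Lmat (n : nat) : 'M[R]_n := \matrix_(i, k) ((i == k) && (i == 0 :> nat))%:R.

Definition Pmat (n : nat) (h : R) (p : 'I_n -> R) : 'M[R]_n :=
  \matrix_(i, k) ((i == k)%:R * (h * p i)).
Definition Dop (n : nat) (h : R) (p : 'I_n -> R) (Q : 'M[R]_n) : 'M[R]_n :=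
  invmx (Pmat h p) *m Q.

Definition norm1 (n : nat) (h : R) (p : 'I_n -> R) (w : 'cV[R]_n) : R :=
  Num.sqrt (\sum_(i < n) h * p i * w i 0 ^+ 2).

Definition hadv (n : nat) (u w : 'cV[R]_n) : 'cV[R]_n := \col_i (u i 0 * w i 0).

Definition commutator_bound (n : nat) (h : R) (p : 'I_n -> R) (Q : 'M[R]_n)
    (C0 : R) : Prop :=
  forall (ub : R -> R), smooth1 ub ->
  forall (Lb : R), (forall z, 0 <= z <= 1 -> `|derive1 ub z| <= Lb) ->
  forall w : 'cV[R]_n,
    let u := \col_(i < n) ub (i%:R * h) in
    norm1 h p (Dop h p Q *m hadv u w - hadv u (Dop h p Q *m w))
      <= C0 * Lb * norm1 h p w.

Definition SBP (n : nat) (p : 'I_n -> R) (Q : 'M[R]_n) : Prop :=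
  (forall i, 0 < p i) /\ Q + Q^T = Rmat n - Lmat n.

(* ---------- two-dimensional grid functions ----------
   A grid function (w_{i,j}) is stored as an N x M matrix W with W i j = w_{i,j}
   (the paper's vector is its row-major vectorization). Then
     (A (x) B) vec(W) = vec(A *m W *m B^T). *)
Section Grid.
Variables (N M : nat) (dx dy : R) (px : 'I_N -> R) (py : 'I_M -> R)
          (Qx : 'M[R]_N) (Qy : 'M[R]_M).

Definition Dx := Dop dx px Qx.
Definition Dy := Dop dy py Qy.

(* frak d_x = D_x (x) I_M ; frak d_y = I_N (x) D_y *)
Definition ddx (W : 'M[R]_(N, M)) : 'M[R]_(N, M) := Dx *m W.
Definition ddy (W : 'M[R]_(N, M)) : 'M[R]_(N, M) := W *m Dy^T.

Definition had (U W : 'M[R]_(N, M)) : 'M[R]_(N, M) := \matrix_(i, j) (U i j * W i j).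

Definition ipP (V W : 'M[R]_(N, M)) : R :=
  \sum_(i < N) \sum_(j < M) (dx * px i) * (dy * py j) * V i j * W i j.

Definition normP2 (V1 V2 : 'M[R]_(N, M)) : R := ipP V1 V1 + ipP V2 V2.

(* boundary projections: calR = R_N (x) I_M, calL = L_N (x) I_M,
   calU = I_N (x) R_M, calD = I_N (x) L_M *)
Definition calR (W : 'M[R]_(N, M)) : 'M[R]_(N, M) := Rmat N *m W.
Definition calL (W : 'M[R]_(N, M)) : 'M[R]_(N, M) := Lmat N *m W.
Definition calU (W : 'M[R]_(N, M)) : 'M[R]_(N, M) := W *m (Rmat M)^T.
Definition calD (W : 'M[R]_(N, M)) : 'M[R]_(N, M) := W *m (Lmat M)^T.

(* P_x^{-1} (x) I_M  and  I_N (x) P_y^{-1} *)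
Definition invPx (W : 'M[R]_(N, M)) : 'M[R]_(N, M) := invmx (Pmat dx px) *m W.
Definition invPy (W : 'M[R]_(N, M)) : 'M[R]_(N, M) := W *m (invmx (Pmat dy py))^T.

Definition diagS (s : 'I_N -> 'I_M -> R) (W : 'M[R]_(N, M)) : 'M[R]_(N, M) :=
  \matrix_(i, j) (s i j * W i j).

Definition Bop (sL sR sD sU : 'I_N -> 'I_M -> R) (W : 'M[R]_(N, M)) : 'M[R]_(N, M) :=
  invPx (diagS sL (calL W) + diagS sR (calR W)) +
  invPy (diagS sD (calD W) + diagS sU (calU W)).

Definition curl (V1 V2 : 'M[R]_(N, M)) : 'M[R]_(N, M) := ddx V2 - ddy V1.
Definition curl2_1 (V1 V2 : 'M[R]_(N, M)) : 'M[R]_(N, M) :=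
  - ddy (ddy V1) + ddx (ddy V2).
Definition curl2_2 (V1 V2 : 'M[R]_(N, M)) : 'M[R]_(N, M) :=
  ddx (ddy V1) - ddx (ddx V2).

Definition restr (f : R -> R -> R) : 'M[R]_(N, M) :=
  \matrix_(i, j) f (i%:R * dx) (j%:R * dy).

Definition dt (V : R -> 'M[R]_(N, M)) (t : R) : 'M[R]_(N, M) :=
  \matrix_(i, j) derive1 (fun s => V s i j) t.

End Grid.
End Defs.
Arguments restr {R N M}.

(* Main.v *)
Require Import Defs.
From HB Require Import structures.
From mathcomp Require Import all_boot all_order all_algebra.
From mathcomp Require Import all_classical all_reals all_analysis.
From mathcomp Require Import ring lra.
Import Order.TTheory GRing.Theory Num.Theory.
Import numFieldNormedType.Exports.
Local Open Scope classical_set_scope.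
Local Open Scope ring_scope.

Section Alg.
Variable R : realType.

Lemma Pmat_diag n (h : R) (p : 'I_n -> R) : Pmat h p = diag_mx (\row_i (h * p i)).
Proof. by apply/matrixP => i k; rewrite !mxE mulr_natl. Qed.

Lemma invmx_Pmat n (h : R) (p : 'I_n -> R) : (forall i, h * p i != 0) ->
  invmx (Pmat h p) = diag_mx (\row_i (h * p i)^-1).
Proof.
move=> nz.
have H1 : Pmat h p *m diag_mx (\row_i (h * p i)^-1) = 1%:M.
  apply/matrixP => i k; rewrite Pmat_diag mul_diag_mx !mxE.
  case: (eqVneq i k) => [->|ne]; first by rewrite mulr1n mulfV.
  by rewrite mulr0n mulr0.
have [U _] := mulmx1_unit H1.
by rewrite -[invmx _]mulmx1 -H1 mulmxA mulVmx // mul1mx.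
Qed.

Lemma Dop_entry n (h : R) (p : 'I_n -> R) Q i k : (forall i, h * p i != 0) ->
  Dop h p Q i k = (h * p i)^-1 * Q i k.
Proof. by move=> nz; rewrite /Dop invmx_Pmat // mul_diag_mx !mxE. Qed.

Lemma CS_weighted n (q a c : 'I_n -> R) (K : R) : (forall i, 0 < q i) ->
  Num.sqrt (\sum_i q i * c i ^+ 2) <= K * Num.sqrt (\sum_i q i * a i ^+ 2) ->
  \sum_i q i * a i * c i <= K * \sum_i q i * a i ^+ 2.
Proof.
move=> qp H.
set A := \sum_i q i * a i ^+ 2; set B := \sum_i q i * c i ^+ 2.
have A0 : 0 <= A by apply: sumr_ge0 => i _; rewrite mulr_ge0 ?sqr_ge0 ?ltW.
have B0 : 0 <= B by apply: sumr_ge0 => i _; rewrite mulr_ge0 ?sqr_ge0 ?ltW.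
have sA := sqrtr_ge0 A; have sB := sqrtr_ge0 B.
case: (ltP 0 K) => K0.
  have BK : B <= K ^+ 2 * A.
    rewrite -(sqr_sqrtr A0) -(sqr_sqrtr B0) -exprMn.
    by rewrite ler_sqr ?nnegrE // mulr_ge0 // ltW.
  have : 2 * \sum_i q i * a i * c i <= K * A + B / K.
    rewrite /A /B mulr_sumr mulr_sumr mulr_suml -big_split /=.
    apply: ler_sum => i _.
    have qi := qp i.
    have h : 2 * (a i * c i) <= K * a i ^+ 2 + c i ^+ 2 / K.
      have kk : K * K^-1 = 1 by rewrite mulfV // gt_eqF.
      have Ki : 0 <= K^-1 by rewrite invr_ge0 ltW.
      have := mulr_ge0 (sqr_ge0 (K * a i - c i)) Ki.
      have -> : (K * a i - c i) ^+ 2 * K^-1 = K * a i ^+ 2 + c i ^+ 2 / K - 2 * (a i * c i).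
        by field; rewrite gt_eqF.
      move=> hh; lra.
    rewrite -(@ler_pM2l _ (q i)) // in h.
    rewrite (le_trans _ (le_trans h _)) //; first by rewrite le_eqVlt; apply/orP; left; apply/eqP; ring.
    rewrite le_eqVlt; apply/orP; left; apply/eqP; ring.
  move=> h2.
  have : B / K <= K * A.
    rewrite ler_pdivrMr //; have -> : K * A * K = K ^+ 2 * A by ring.
    exact: BK.
  move=> h3; nra.
have sB0 : Num.sqrt B = 0.
  apply/eqP; rewrite eq_le sB andbT; apply: (le_trans H).
  by rewrite mulr_le0_ge0.
have KA0 : K * Num.sqrt A = 0.
  have := mulr_le0_ge0 K0 sA; move: H; rewrite -/B sB0 => H1 H2; lra.
have -> : K * A = 0.
  by rewrite -(sqr_sqrtr A0) expr2 mulrA KA0 mul0r.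
have B00 : B = 0 by move/eqP: sB0; rewrite sqrtr_eq0 => hB; apply/eqP; rewrite eq_le hB B0.
have ci : forall i, c i = 0.
  move=> i; move/eqP: B00; rewrite psumr_eq0 => [/allP /(_ i (mem_index_enum _))|i' _]; last first.
    by rewrite mulr_ge0 ?sqr_ge0 ?ltW.
  by rewrite /= mulf_eq0 gt_eqF ?qp //= sqrf_eq0 => /eqP.
by rewrite big1 // => i _; rewrite ci mulr0.
Qed.


Lemma SBP_entry n (p : 'I_n -> R) (Q : 'M[R]_n) i k : SBP p Q ->
  Q i k + Q k i = ((i == k)%:R * (((i:nat) == n.-1)%:R - ((i:nat) == 0%N)%:R)).
Proof.
case=> _ /matrixP /(_ i k); rewrite !mxE => ->.
by case: (eqVneq i k) => [->|ne] /=; rewrite ?mul1r ?mul0r ?subr0 //; case: (_ == _); case: (_ == _).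
Qed.

Lemma Dmul_entry n (h : R) (p : 'I_n -> R) Q (v : 'cV[R]_n) i : (forall i, h * p i != 0) ->
  h * p i * (Dop h p Q *m v) i 0 = \sum_k Q i k * v k 0.
Proof.
move=> nz; rewrite mxE mulr_sumr; apply: eq_bigr => k _.
by rewrite Dop_entry // mulrA mulrA mulfV ?mul1r.
Qed.

Lemma adv1D n (h : R) (p : 'I_n -> R) (Q : 'M[R]_n) C0 (ub : R -> R) Lb (w : 'cV[R]_n) :
  0 < h -> SBP p Q -> commutator_bound h p Q C0 -> smooth1 ub ->
  (forall z, 0 <= z <= 1 -> `|derive1 ub z| <= Lb) ->
  - 2 * \sum_i h * p i * w i 0 * (ub (i%:R * h) * (Dop h p Q *m w) i 0)
  <= C0 * Lb * \sum_i h * p i * w i 0 ^+ 2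
     - \sum_(i < n) (((i:nat) == n.-1)%:R - ((i:nat) == 0%N)%:R) * ub (i%:R * h) * w i 0 ^+ 2.
Proof.
move=> h0 sbp cb smu dub.
have pp : forall i, 0 < h * p i by move=> i; rewrite mulr_gt0 //; case: sbp.
have nz : forall i, h * p i != 0 by move=> i; rewrite gt_eqF.
set u := fun i : 'I_n => ub (i%:R * h).
set S1 := \sum_i \sum_k w i 0 * u i * Q i k * w k 0.
set S2 := \sum_i \sum_k w i 0 * Q i k * u k * w k 0.
have E1 : \sum_i h * p i * w i 0 * (u i * (Dop h p Q *m w) i 0) = S1.
  apply: eq_bigr => i _.
  have -> : h * p i * w i 0 * (u i * (Dop h p Q *m w) i 0) =
     w i 0 * u i * (h * p i * (Dop h p Q *m w) i 0) by ring.
  rewrite Dmul_entry // mulr_sumr; apply: eq_bigr => k _; ring.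
have E12 : S1 + S2 = \sum_(i < n) (((i:nat) == n.-1)%:R - ((i:nat) == 0%N)%:R) * u i * w i 0 ^+ 2.
  rewrite /S2 exchange_big /S1 -big_split /=; apply: eq_bigr => i _.
  rewrite -big_split /=.
  have -> : \sum_k (w i 0 * u i * Q i k * w k 0 + w k 0 * Q k i * u i * w i 0) =
    \sum_k (w i 0 * u i * w k 0) * (Q i k + Q k i).
    by apply: eq_bigr => k _; ring.
  under eq_bigr => k _ do rewrite (@SBP_entry n p Q i k sbp).
  rewrite (bigD1 i) //= big1 ?addr0; first by rewrite eqxx mul1r; ring.
  by move=> k /negbTE; rewrite eq_sym => ->; rewrite mul0r mulr0.
have Ec : \sum_i h * p i * w i 0 * ((Dop h p Q *m hadv (\col_(i < n) ub (i%:R * h)) w) i 0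
     - hadv (\col_(i < n) ub (i%:R * h)) (Dop h p Q *m w) i 0) = S2 - S1.
  rewrite /S2 /S1 -sumrB; apply: eq_bigr => i _.
  have -> : h * p i * w i 0 * ((Dop h p Q *m hadv (\col_(i < n) ub (i%:R * h)) w) i 0
     - hadv (\col_(i < n) ub (i%:R * h)) (Dop h p Q *m w) i 0) =
     w i 0 * (h * p i * (Dop h p Q *m hadv (\col_(i < n) ub (i%:R * h)) w) i 0)
     - w i 0 * u i * (h * p i * (Dop h p Q *m w) i 0).
    have hE : forall (a b : 'cV[R]_n) j, hadv a b j 0 = a j 0 * b j 0 by move=> *; rewrite /hadv mxE.
    have cE : (\col_(i < n) ub (i%:R * h)) i 0 = u i by rewrite mxE.
    by rewrite hE cE; ring.
  rewrite !Dmul_entry // mulr_sumr mulr_sumr; congr (_ - _); apply: eq_bigr => k _.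
      by rewrite /hadv !mxE /u; ring.
  by rewrite /u; ring.
have CB := cb ub smu Lb dub w; rewrite /= in CB.
have CS := @CS_weighted n (fun i => h * p i) (fun i => w i 0)
   (fun i => (Dop h p Q *m hadv (\col_(i < n) ub (i%:R * h)) w) i 0
     - hadv (\col_(i < n) ub (i%:R * h)) (Dop h p Q *m w) i 0) (C0 * Lb) pp.
have : \sum_i h * p i * w i 0 * ((Dop h p Q *m hadv (\col_(i < n) ub (i%:R * h)) w) i 0
     - hadv (\col_(i < n) ub (i%:R * h)) (Dop h p Q *m w) i 0) <= C0 * Lb * \sum_i h * p i * w i 0 ^+ 2.
  apply: CS; move: CB; rewrite /norm1.
  have e : forall (A B : 'cV[R]_n) i, (A - B) i 0 = A i 0 - B i 0 by move=> A B i; rewrite !mxE.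
  by under eq_bigr => i _ do rewrite e.
rewrite Ec E1 -E12 => H; lra.
Qed.


Lemma sbp_sum n (p : 'I_n -> R) (Q : 'M[R]_n) (a b : 'I_n -> R) : SBP p Q ->
  \sum_i \sum_k a i * Q i k * b k + \sum_i \sum_k b i * Q i k * a k =
  \sum_(i < n) (((i:nat) == n.-1)%:R - ((i:nat) == 0%N)%:R) * a i * b i.
Proof.
move=> sbp; rewrite [X in _ + X]exchange_big -big_split /=; apply: eq_bigr => i _.
rewrite -big_split /=.
have -> : \sum_k (a i * Q i k * b k + b k * Q k i * a i) =
    \sum_k (a i * b k) * (Q i k + Q k i) by apply: eq_bigr => k _; ring.
under eq_bigr => k _ do rewrite (@SBP_entry n p Q i k sbp).
rewrite (bigD1 i) //= big1 ?addr0; first by rewrite eqxx mul1r; ring.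
by move=> k /negbTE; rewrite eq_sym => ->; rewrite mul0r mulr0.
Qed.

End Alg.

Section Grid2.
Variable R : realType.
Variables (N M : nat) (dx dy : R) (px : 'I_N -> R) (py : 'I_M -> R)
          (Qx : 'M[R]_N) (Qy : 'M[R]_M).
Hypotheses (hdx : 0 < dx) (hdy : 0 < dy) (sbpx : SBP px Qx) (sbpy : SBP py Qy).

Let wx i := dx * px i.
Let wy j := dy * py j.

Lemma wx_gt0 i : 0 < dx * px i. Proof. by rewrite mulr_gt0 //; case: sbpx. Qed.
Lemma wy_gt0 j : 0 < dy * py j. Proof. by rewrite mulr_gt0 //; case: sbpy. Qed.
Lemma wx_nz i : dx * px i != 0. Proof. by rewrite gt_eqF // wx_gt0. Qed.
Lemma wy_nz j : dy * py j != 0. Proof. by rewrite gt_eqF // wy_gt0. Qed.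

Notation ip := (ipP dx dy px py).
Lemma pxp i : 0 < px i. Proof. by case: sbpx. Qed.
Lemma pyp j : 0 < py j. Proof. by case: sbpy. Qed.
Ltac sidec := rewrite ?(gt_eqF hdx) ?(gt_eqF hdy) ?(gt_eqF (pxp _)) ?(gt_eqF (pyp _)).

Lemma ddxE (W : 'M[R]_(N, M)) i j :
  ddx dx px Qx W i j = (dx * px i)^-1 * \sum_k Qx i k * W k j.
Proof.
rewrite /ddx /Dx mxE mulr_sumr; apply: eq_bigr => k _.
by rewrite Dop_entry ?mulrA //; exact: wx_nz.
Qed.

Lemma ddyE (W : 'M[R]_(N, M)) i j :
  ddy dy py Qy W i j = (dy * py j)^-1 * \sum_l Qy j l * W i l.
Proof.
rewrite /ddy /Dy mxE mulr_sumr; apply: eq_bigr => l _.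
by rewrite mxE Dop_entry ?mulrA //; [ring | exact: wy_nz].
Qed.

Lemma invPxE (W : 'M[R]_(N, M)) i j : invPx dx px W i j = (dx * px i)^-1 * W i j.
Proof.
rewrite /invPx invmx_Pmat; last exact: wx_nz.
by rewrite mul_diag_mx !mxE.
Qed.

Lemma invPyE (W : 'M[R]_(N, M)) i j : invPy dy py W i j = (dy * py j)^-1 * W i j.
Proof.
rewrite /invPy invmx_Pmat; last exact: wy_nz.
by rewrite tr_diag_mx mul_mx_diag !mxE mulrC.
Qed.

Lemma calRE (W : 'M[R]_(N, M)) i j : calR W i j = ((i:nat) == N.-1)%:R * W i j.
Proof.
rewrite /calR mxE (bigD1 i) //= big1 ?addr0; first by rewrite mxE eqxx.
by move=> k /negbTE ik; rewrite mxE eq_sym ik mul0r.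
Qed.

Lemma calLE (W : 'M[R]_(N, M)) i j : calL W i j = ((i:nat) == 0%N)%:R * W i j.
Proof.
rewrite /calL mxE (bigD1 i) //= big1 ?addr0; first by rewrite mxE eqxx.
by move=> k /negbTE ik; rewrite mxE eq_sym ik mul0r.
Qed.

Lemma calUE (W : 'M[R]_(N, M)) i j : calU W i j = ((j:nat) == M.-1)%:R * W i j.
Proof.
rewrite /calU mxE (bigD1 j) //= big1 ?addr0; first by rewrite !mxE eqxx mulrC.
by move=> k /negbTE ik; rewrite !mxE eq_sym ik mulr0.
Qed.

Lemma calDE (W : 'M[R]_(N, M)) i j : calD W i j = ((j:nat) == 0%N)%:R * W i j.
Proof.
rewrite /calD mxE (bigD1 j) //= big1 ?addr0; first by rewrite !mxE eqxx mulrC.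
by move=> k /negbTE ik; rewrite !mxE eq_sym ik mulr0.
Qed.


Lemma subE (X Y : 'M[R]_(N, M)) i j : (X - Y) i j = X i j - Y i j.
Proof. by rewrite !mxE. Qed.

Lemma ipD V A B : ip V (A + B) = ip V A + ip V B.
Proof.
rewrite /ipP -big_split; apply: eq_bigr => i _; rewrite -big_split; apply: eq_bigr => j _.
by rewrite mxE mulrDr.
Qed.
Lemma ipN V A : ip V (- A) = - ip V A.
Proof.
rewrite /ipP -sumrN; apply: eq_bigr => i _; rewrite -sumrN; apply: eq_bigr => j _.
by rewrite mxE; ring.
Qed.
Lemma ipB V A B : ip V (A - B) = ip V A - ip V B.
Proof. by rewrite ipD ipN. Qed.
Lemma ipZ V k A : ip V (k *: A) = k * ip V A.
Proof.
rewrite /ipP mulr_sumr; apply: eq_bigr => i _; rewrite mulr_sumr; apply: eq_bigr => j _.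
by rewrite mxE; ring.
Qed.
Lemma ipC V W : ip V W = ip W V.
Proof. by rewrite /ipP; apply: eq_bigr => i _; apply: eq_bigr => j _; ring. Qed.

Lemma ip_ddx A B : ip A (ddx dx px Qx B) =
  \sum_j dy * py j * \sum_i \sum_k A i j * Qx i k * B k j.
Proof.
rewrite /ipP exchange_big; apply: eq_bigr => j _; rewrite mulr_sumr; apply: eq_bigr => i _.
rewrite ddxE.
have -> : dx * px i * (dy * py j) * A i j * ((dx * px i)^-1 * \sum_k Qx i k * B k j)
   = dy * py j * (A i j * \sum_k Qx i k * B k j).
  by field; sidec.
by rewrite mulr_sumr; congr (_ * _); apply: eq_bigr => k _; ring.
Qed.

Lemma ip_ddy A B : ip A (ddy dy py Qy B) =
  \sum_i dx * px i * \sum_j \sum_l A i j * Qy j l * B i l.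
Proof.
rewrite /ipP; apply: eq_bigr => i _; rewrite mulr_sumr; apply: eq_bigr => j _.
rewrite ddyE.
have -> : dx * px i * (dy * py j) * A i j * ((dy * py j)^-1 * \sum_l Qy j l * B i l)
   = dx * px i * (A i j * \sum_l Qy j l * B i l).
  by field; sidec.
by rewrite mulr_sumr; congr (_ * _); apply: eq_bigr => k _; ring.
Qed.

Lemma sbpx2 A B : ip A (ddx dx px Qx B) + ip B (ddx dx px Qx A) =
  \sum_(i < N) \sum_(j < M) dy * py j * (((i:nat) == N.-1)%:R - ((i:nat) == 0%N)%:R) * A i j * B i j.
Proof.
rewrite !ip_ddx -big_split /= exchange_big; apply: eq_bigr => j _.
rewrite -mulrDr (@sbp_sum _ N px Qx (fun i => A i j) (fun i => B i j) sbpx) mulr_sumr.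
by apply: eq_bigr => i _; ring.
Qed.

Lemma sbpy2 A B : ip A (ddy dy py Qy B) + ip B (ddy dy py Qy A) =
  \sum_(i < N) \sum_(j < M) dx * px i * (((j:nat) == M.-1)%:R - ((j:nat) == 0%N)%:R) * A i j * B i j.
Proof.
rewrite !ip_ddy -big_split /=; apply: eq_bigr => i _.
rewrite -mulrDr (@sbp_sum _ M py Qy (fun j => A i j) (fun j => B i j) sbpy) mulr_sumr.
by apply: eq_bigr => j _; ring.
Qed.

Lemma ip_bdx A B : ip A (calR (invPx dx px B) - calL (invPx dx px B)) =
  \sum_(i < N) \sum_(j < M) dy * py j * (((i:nat) == N.-1)%:R - ((i:nat) == 0%N)%:R) * A i j * B i j.
Proof.
rewrite /ipP; apply: eq_bigr => i _; apply: eq_bigr => j _.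
rewrite subE calRE calLE !invPxE.
by field; sidec.
Qed.

Lemma ip_bdy A B : ip A (calU (invPy dy py B) - calD (invPy dy py B)) =
  \sum_(i < N) \sum_(j < M) dx * px i * (((j:nat) == M.-1)%:R - ((j:nat) == 0%N)%:R) * A i j * B i j.
Proof.
rewrite /ipP; apply: eq_bigr => i _; apply: eq_bigr => j _.
rewrite subE calUE calDE !invPyE.
by field; sidec.
Qed.


Lemma smooth2_x (u : R -> R -> R) y : smooth2 u -> smooth1 (fun s => u s y).
Proof.
move=> su n x.
have -> : iter n (@derive1 R R) (fun s => u s y) = fun s => iterpd (nseq n true) u s y.
  by elim: n => //= n ->.
by have [/(_ x y) [] ] := su (nseq n true).
Qed.

Lemma smooth2_y (u : R -> R -> R) x : smooth2 u -> smooth1 (fun s => u x s).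
Proof.
move=> su n y.
have -> : iter n (@derive1 R R) (fun s => u x s) = fun s => iterpd (nseq n false) u x s.
  by elim: n => //= n ->.
by have [/(_ x y) [] ] := su (nseq n false).
Qed.

Lemma gridx (i : 'I_N) : (N.-1)%:R * dx = 1 -> 0 <= i%:R * dx <= 1.
Proof.
move=> hN; rewrite mulr_ge0 ?ler0n ?(ltW hdx) //= -[leRHS]hN ler_pM2r // ler_nat.
by rewrite -ltnS prednK // (leq_ltn_trans _ (ltn_ord i)).
Qed.

Lemma gridy (j : 'I_M) : (M.-1)%:R * dy = 1 -> 0 <= j%:R * dy <= 1.
Proof.
move=> hM; rewrite mulr_ge0 ?ler0n ?(ltW hdy) //= -[leRHS]hM ler_pM2r // ler_nat.
by rewrite -ltnS prednK // (leq_ltn_trans _ (ltn_ord j)).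
Qed.

Lemma sum_combine (J : finType) (a T A B : J -> R) (K : R) :
  (forall j, 0 <= a j) -> (forall j, - 2 * T j <= K * A j - B j) ->
  - 2 * \sum_j a j * T j <= K * \sum_j a j * A j - \sum_j a j * B j.
Proof.
move=> a0 h.
have : \sum_j a j * (- 2 * T j) <= \sum_j a j * (K * A j - B j).
  by apply: ler_sum => j _; apply: ler_wpM2l.
have -> : \sum_j a j * (- 2 * T j) = - 2 * \sum_j a j * T j.
  by rewrite mulr_sumr; apply: eq_bigr => j _; ring.
have -> : \sum_j a j * (K * A j - B j) = K * \sum_j a j * A j - \sum_j a j * B j.
  by rewrite mulr_sumr -sumrB; apply: eq_bigr => j _; ring.
done.
Qed.

Lemma adv_x (u : R -> R -> R) C0 Lu W :
  smooth2 u -> commutator_bound dx px Qx C0 -> (N.-1)%:R * dx = 1 -> (M.-1)%:R * dy = 1 ->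
  (forall x y, 0 <= x <= 1 -> 0 <= y <= 1 -> `|pdx u x y| <= Lu) ->
  - 2 * ip W (had (restr dx dy u) (ddx dx px Qx W)) <= C0 * Lu * ip W W -
  \sum_(i < N) \sum_(j < M) dy * py j * (((i:nat) == N.-1)%:R - ((i:nat) == 0%N)%:R)
      * restr dx dy u i j * W i j ^+ 2.
Proof.
move=> su cb hN hM hLu.
pose w j := col j W.
pose ub (j : 'I_M) := fun s => u s (j%:R * dy).
have key := fun j => @adv1D _ N dx px Qx C0 (ub j) Lu (w j) hdx sbpx cb (@smooth2_x u (j%:R * dy) su)
   (fun z hz => hLu z _ hz (gridy j hM)).
have E1 : ip W (had (restr dx dy u) (ddx dx px Qx W)) = \sum_j dy * py j *
   \sum_i dx * px i * w j i 0 * (ub j (i%:R * dx) * (Dop dx px Qx *m w j) i 0).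
  rewrite /ipP exchange_big; apply: eq_bigr => j _; rewrite mulr_sumr; apply: eq_bigr => i _.
  have -> : (Dop dx px Qx *m w j) i 0 = ddx dx px Qx W i j.
    by rewrite /ddx /Dx !mxE; apply: eq_bigr => k _; rewrite !mxE.
  by rewrite /w /ub !mxE; ring.
have E2 : ip W W = \sum_j dy * py j * \sum_i dx * px i * w j i 0 ^+ 2.
  rewrite /ipP exchange_big; apply: eq_bigr => j _; rewrite mulr_sumr; apply: eq_bigr => i _.
  by rewrite /w !mxE; ring.
have E3 : \sum_(i < N) \sum_(j < M) dy * py j * (((i:nat) == N.-1)%:R - ((i:nat) == 0%N)%:R)
      * restr dx dy u i j * W i j ^+ 2 = \sum_j dy * py j *
   \sum_(i < N) (((i:nat) == N.-1)%:R - ((i:nat) == 0%N)%:R) * ub j (i%:R * dx) * w j i 0 ^+ 2.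
  rewrite exchange_big; apply: eq_bigr => j _; rewrite mulr_sumr; apply: eq_bigr => i _.
  by rewrite /w /ub !mxE; ring.
rewrite E1 E2 E3; apply: sum_combine => //.
by move=> j; rewrite ltW // wy_gt0.
Qed.

Lemma adv_y (u : R -> R -> R) C0 Lu W :
  smooth2 u -> commutator_bound dy py Qy C0 -> (N.-1)%:R * dx = 1 -> (M.-1)%:R * dy = 1 ->
  (forall x y, 0 <= x <= 1 -> 0 <= y <= 1 -> `|pdy u x y| <= Lu) ->
  - 2 * ip W (had (restr dx dy u) (ddy dy py Qy W)) <= C0 * Lu * ip W W -
  \sum_(i < N) \sum_(j < M) dx * px i * (((j:nat) == M.-1)%:R - ((j:nat) == 0%N)%:R)
      * restr dx dy u i j * W i j ^+ 2.
Proof.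
move=> su cb hN hM hLu.
pose w i := (row i W)^T.
pose ub (i : 'I_N) := fun s => u (i%:R * dx) s.
have key := fun i => @adv1D _ M dy py Qy C0 (ub i) Lu (w i) hdy sbpy cb (@smooth2_y u (i%:R * dx) su)
   (fun z hz => hLu _ z (gridx i hN) hz).
have E1 : ip W (had (restr dx dy u) (ddy dy py Qy W)) = \sum_i dx * px i *
   \sum_j dy * py j * w i j 0 * (ub i (j%:R * dy) * (Dop dy py Qy *m w i) j 0).
  rewrite /ipP; apply: eq_bigr => i _; rewrite mulr_sumr; apply: eq_bigr => j _.
  have -> : (Dop dy py Qy *m w i) j 0 = ddy dy py Qy W i j.
    by rewrite /ddy /Dy !mxE; apply: eq_bigr => k _; rewrite !mxE mulrC.
  by rewrite /w /ub !mxE; ring.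
have E2 : ip W W = \sum_i dx * px i * \sum_j dy * py j * w i j 0 ^+ 2.
  rewrite /ipP; apply: eq_bigr => i _; rewrite mulr_sumr; apply: eq_bigr => j _.
  by rewrite /w !mxE; ring.
have E3 : \sum_(i < N) \sum_(j < M) dx * px i * (((j:nat) == M.-1)%:R - ((j:nat) == 0%N)%:R)
      * restr dx dy u i j * W i j ^+ 2 = \sum_i dx * px i *
   \sum_(j < M) (((j:nat) == M.-1)%:R - ((j:nat) == 0%N)%:R) * ub i (j%:R * dy) * w i j 0 ^+ 2.
  apply: eq_bigr => i _; rewrite mulr_sumr; apply: eq_bigr => j _.
  by rewrite /w /ub !mxE; ring.
rewrite E1 E2 E3; apply: sum_combine => //.
by move=> i; rewrite ltW // wx_gt0.
Qed.


Lemma addE (X Y : 'M[R]_(N, M)) i j : (X + Y) i j = X i j + Y i j.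
Proof. by rewrite !mxE. Qed.

Lemma diagSE (s : 'I_N -> 'I_M -> R) (X : 'M[R]_(N, M)) i j : diagS s X i j = s i j * X i j.
Proof. by rewrite mxE. Qed.

Lemma ip_Bop (sL sR sD sU : 'I_N -> 'I_M -> R) W :
  ip W (Bop dx dy px py sL sR sD sU W) =
  \sum_(i < N) \sum_(j < M) (dy * py j * (sL i j * ((i:nat) == 0%N)%:R + sR i j * ((i:nat) == N.-1)%:R)
     + dx * px i * (sD i j * ((j:nat) == 0%N)%:R + sU i j * ((j:nat) == M.-1)%:R)) * W i j ^+ 2.
Proof.
rewrite /ipP; apply: eq_bigr => i _; apply: eq_bigr => j _.
rewrite /Bop addE invPxE invPyE !addE !diagSE calLE calRE calDE calUE.
by field; sidec.
Qed.

Lemma pen_comp (u1 u2 : R -> R -> R) (sL sR sD sU : 'I_N -> 'I_M -> R) W :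
  (N.-1)%:R * dx = 1 -> (M.-1)%:R * dy = 1 ->
  (forall (i : 'I_N) (j : 'I_M), (i : nat) = N.-1 ->
      sR i j <= Num.min (u1 1 (j%:R * dy)) 0 / 2) ->
  (forall (i : 'I_N) (j : 'I_M), (i : nat) = 0%N ->
      sL i j <= - (Num.max (u1 0 (j%:R * dy)) 0 / 2)) ->
  (forall (i : 'I_N) (j : 'I_M), (j : nat) = M.-1 ->
      sU i j <= Num.min (u2 (i%:R * dx) 1) 0 / 2) ->
  (forall (i : 'I_N) (j : 'I_M), (j : nat) = 0%N ->
      sD i j <= - (Num.max (u2 (i%:R * dx) 0) 0 / 2)) ->
  2 * ip W (Bop dx dy px py sL sR sD sU W)
  - \sum_(i < N) \sum_(j < M) dy * py j * (((i:nat) == N.-1)%:R - ((i:nat) == 0%N)%:R)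
      * restr dx dy u1 i j * W i j ^+ 2
  - \sum_(i < N) \sum_(j < M) dx * px i * (((j:nat) == M.-1)%:R - ((j:nat) == 0%N)%:R)
      * restr dx dy u2 i j * W i j ^+ 2 <= 0.
Proof.
move=> hN hM hR hL hU hD.
rewrite ip_Bop mulr_sumr -!sumrB; apply: sumr_le0 => i _.
rewrite mulr_sumr -!sumrB; apply: sumr_le0 => j _.
rewrite !mxE.
set U1 := u1 _ _; set U2 := u2 _ _.
have wxp := wx_gt0 i; have wyp := wy_gt0 j.
have W2 := sqr_ge0 (W i j).
suff [hx hy] : 2 * (sL i j * ((i:nat) == 0%N)%:R + sR i j * ((i:nat) == N.-1)%:R)
      - (((i:nat) == N.-1)%:R - ((i:nat) == 0%N)%:R) * U1 <= 0 /\
   2 * (sD i j * ((j:nat) == 0%N)%:R + sU i j * ((j:nat) == M.-1)%:R)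
      - (((j:nat) == M.-1)%:R - ((j:nat) == 0%N)%:R) * U2 <= 0.
  set a := (X in X <= 0) in hx; set b := (X in X <= 0) in hy.
  have ha := mulr_le0_ge0 hx (mulr_ge0 (ltW wyp) W2).
  have hb := mulr_le0_ge0 hy (mulr_ge0 (ltW wxp) W2).
  rewrite /a /b in ha hb; lra.
split.
  case: (eqVneq (i:nat) N.-1) => [e1|n1]; case: (eqVneq (i:nat) 0%N) => [e0|n0] /=.
  - by move: hN; rewrite -e1 e0 mul0r => /eqP; rewrite eq_sym oner_eq0.
  - have := hR i j e1; rewrite /U1 e1 hN minEle; case: ifP => ? ?; lra.
  - have := hL i j e0; rewrite /U1 e0 mul0r maxEle; case: ifP => ? ?; lra.
  - lra.
case: (eqVneq (j:nat) M.-1) => [e1|n1]; case: (eqVneq (j:nat) 0%N) => [e0|n0] /=.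
- by move: hM; rewrite -e1 e0 mul0r => /eqP; rewrite eq_sym oner_eq0.
- have := hU i j e1; rewrite /U2 e1 hM minEle; case: ifP => ? ?; lra.
- have := hD i j e0; rewrite /U2 e0 mul0r maxEle; case: ifP => ? ?; lra.
- lra.
Qed.


Lemma Cterm (A B C D W1 W2 : 'M[R]_(N, M)) Ld :
  (forall i j, [/\ `|A i j| <= Ld, `|B i j| <= Ld, `|C i j| <= Ld & `|D i j| <= Ld]) ->
  ip W1 (- had A W1 + had B W2) + ip W2 (had C W1 - had D W2) <=
  2 * Ld * (ip W1 W1 + ip W2 W2).
Proof.
move=> hb; rewrite /ipP -!big_split mulr_sumr /=; apply: ler_sum => i _.
rewrite -!big_split mulr_sumr /=; apply: ler_sum => j _.
rewrite !mxE.
have [ha hb' hc hd] := hb i j.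
move: ha hb' hc hd; rewrite !ler_norml => /andP[a1 a2] /andP[b1 b2] /andP[c1 c2] /andP[d1 d2].
have w0 : 0 < dx * px i * (dy * py j) by rewrite mulr_gt0 ?wx_gt0 ?wy_gt0.
set w := dx * px i * (dy * py j) in w0 *.
set x := W1 i j; set y := W2 i j.
suff : (- A i j * x + B i j * y) * x + (C i j * x - D i j * y) * y <= 2 * Ld * (x * x + y * y).
  move=> hh; have := ler_wpM2l (ltW w0) hh.
  move=> hh2; apply: (le_trans _ (le_trans hh2 _)); rewrite le_eqVlt; apply/orP; left; apply/eqP; ring.
have e1 : 0 <= (Ld + A i j) * x ^+ 2 by rewrite mulr_ge0 ?sqr_ge0 //; lra.
have e2 : 0 <= (Ld + D i j) * y ^+ 2 by rewrite mulr_ge0 ?sqr_ge0 //; lra.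
have e3 : 0 <= (Ld - B i j) * (x + y) ^+ 2 by rewrite mulr_ge0 ?sqr_ge0 //; lra.
have e4 : 0 <= (Ld + B i j) * (x - y) ^+ 2 by rewrite mulr_ge0 ?sqr_ge0 //; lra.
have e5 : 0 <= (Ld - C i j) * (x + y) ^+ 2 by rewrite mulr_ge0 ?sqr_ge0 //; lra.
have e6 : 0 <= (Ld + C i j) * (x - y) ^+ 2 by rewrite mulr_ge0 ?sqr_ge0 //; lra.
nra.
Qed.


Notation cu := (curl dx dy px py Qx Qy).

Lemma curl2_1E V1 V2 : curl2_1 dx dy px py Qx Qy V1 V2 = ddy dy py Qy (cu V1 V2).
Proof. by rewrite /curl2_1 /curl /ddy /ddx mulmxBl mulmxA addrC. Qed.

Lemma curl2_2E V1 V2 : curl2_2 dx dy px py Qx Qy V1 V2 = - ddx dx px Qx (cu V1 V2).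
Proof. by rewrite /curl2_2 /curl /ddy /ddx mulmxBr opprB mulmxA. Qed.

Lemma energy (eps : R) (u1 u2 : R -> R -> R) C0 (sL sR sD sU : 'I_N -> 'I_M -> R)
   Lu Ld (W1 W2 X1 X2 : 'M[R]_(N, M)) :
  smooth2 u1 -> smooth2 u2 ->
  (N.-1)%:R * dx = 1 -> (M.-1)%:R * dy = 1 ->
  commutator_bound dx px Qx C0 -> commutator_bound dy py Qy C0 ->
  (forall (i : 'I_N) (j : 'I_M), (i : nat) = N.-1 ->
      sR i j <= Num.min (u1 1 (j%:R * dy)) 0 / 2) ->
  (forall (i : 'I_N) (j : 'I_M), (i : nat) = 0%N ->
      sL i j <= - (Num.max (u1 0 (j%:R * dy)) 0 / 2)) ->
  (forall (i : 'I_N) (j : 'I_M), (j : nat) = M.-1 ->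
      sU i j <= Num.min (u2 (i%:R * dx) 1) 0 / 2) ->
  (forall (i : 'I_N) (j : 'I_M), (j : nat) = 0%N ->
      sD i j <= - (Num.max (u2 (i%:R * dx) 0) 0 / 2)) ->
  (forall x y, 0 <= x <= 1 -> 0 <= y <= 1 ->
     [/\ `|pdx u1 x y| <= Lu, `|pdy u1 x y| <= Lu,
         `|pdx u2 x y| <= Lu & `|pdy u2 x y| <= Lu]) ->
  (forall (i : 'I_N) (j : 'I_M),
     [/\ `|ddx dx px Qx (restr dx dy u1) i j| <= Ld,
         `|ddy dy py Qy (restr dx dy u1) i j| <= Ld,
         `|ddx dx px Qx (restr dx dy u2) i j| <= Ld &
         `|ddy dy py Qy (restr dx dy u2) i j| <= Ld]) ->
  X1 + had (restr dx dy u1) (ddx dx px Qx W1) + had (restr dx dy u2) (ddy dy py Qy W1)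
     - (- had (ddy dy py Qy (restr dx dy u2)) W1 + had (ddy dy py Qy (restr dx dy u1)) W2)
     + eps *: curl2_1 dx dy px py Qx Qy W1 W2
   = Bop dx dy px py sL sR sD sU W1 +
     eps *: (calU (invPy dy py (cu W1 W2)) - calD (invPy dy py (cu W1 W2))) ->
  X2 + had (restr dx dy u1) (ddx dx px Qx W2) + had (restr dx dy u2) (ddy dy py Qy W2)
     - (had (ddx dx px Qx (restr dx dy u2)) W1 - had (ddx dx px Qx (restr dx dy u1)) W2)
     + eps *: curl2_2 dx dy px py Qx Qy W1 W2
   = Bop dx dy px py sL sR sD sU W2 -
     eps *: (calR (invPx dx px (cu W1 W2)) - calL (invPx dx px (cu W1 W2))) ->
  2 * (ip W1 X1 + ip W2 X2) <=
    (2 * C0 * Lu + 4 * Ld) * (ip W1 W1 + ip W2 W2) - 2 * eps * ip (cu W1 W2) (cu W1 W2).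
Proof.
move=> s1 s2 hN hM cbx cby hR hL hU hD hLu hLd eq1 eq2.
have L1x : forall x y, 0 <= x <= 1 -> 0 <= y <= 1 -> `|pdx u1 x y| <= Lu.
  by move=> x y hx hy; case: (hLu x y hx hy).
have L1y : forall x y, 0 <= x <= 1 -> 0 <= y <= 1 -> `|pdy u1 x y| <= Lu.
  by move=> x y hx hy; case: (hLu x y hx hy).
have L2x : forall x y, 0 <= x <= 1 -> 0 <= y <= 1 -> `|pdx u2 x y| <= Lu.
  by move=> x y hx hy; case: (hLu x y hx hy).
have L2y : forall x y, 0 <= x <= 1 -> 0 <= y <= 1 -> `|pdy u2 x y| <= Lu.
  by move=> x y hx hy; case: (hLu x y hx hy).
have ax1 := @adv_x u1 C0 Lu W1 s1 cbx hN hM L1x.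
have ay1 := @adv_y u2 C0 Lu W1 s2 cby hN hM L2y.
have ax2 := @adv_x u1 C0 Lu W2 s1 cbx hN hM L1x.
have ay2 := @adv_y u2 C0 Lu W2 s2 cby hN hM L2y.
have p1 := @pen_comp u1 u2 sL sR sD sU W1 hN hM hR hL hU hD.
have p2 := @pen_comp u1 u2 sL sR sD sU W2 hN hM hR hL hU hD.
have hC := @Cterm (ddy dy py Qy (restr dx dy u2)) (ddy dy py Qy (restr dx dy u1))
   (ddx dx px Qx (restr dx dy u2)) (ddx dx px Qx (restr dx dy u1)) W1 W2 Ld
   (fun i j => let: And4 a b c d := hLd i j in And4 d b c a).
have e1 := congr1 (ip W1) eq1.
have e2 := congr1 (ip W2) eq2.
rewrite curl2_1E in e1; rewrite curl2_2E in e2.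
have by1 := ip_bdy W1 (cu W1 W2).
have bx2 := ip_bdx W2 (cu W1 W2).
move: p1 e1 by1; move: (Bop dx dy px py sL sR sD sU W1) => B1.
move: (calU (invPy dy py (cu W1 W2)) - calD (invPy dy py (cu W1 W2))) => D1 p1 e1 by1.
move: p2 e2 bx2; move: (Bop dx dy px py sL sR sD sU W2) => B2.
move: (calR (invPx dx px (cu W1 W2)) - calL (invPx dx px (cu W1 W2))) => D2 p2 e2 bx2.
rewrite !(ipD, ipB, ipZ, ipN) in e1.
rewrite !(ipD, ipB, ipZ, ipN) in e2.
have sy := sbpy2 W1 (cu W1 W2).
have sx := sbpx2 W2 (cu W1 W2).
have ecc : ip (cu W1 W2) (cu W1 W2) =
   ip (cu W1 W2) (ddx dx px Qx W2) - ip (cu W1 W2) (ddy dy py Qy W1).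
  by rewrite {2}/curl ipB.
move: hC; rewrite !(ipD, ipB, ipN) => hC.
have cc0 : 0 <= ip (cu W1 W2) (cu W1 W2).
  rewrite /ipP; apply: sumr_ge0 => i _; apply: sumr_ge0 => j _.
  by rewrite -mulrA mulr_ge0 ?sqr_ge0 // mulr_ge0 // ltW // ?wx_gt0 ?wy_gt0.
set Sy := \sum_(i < N) _ in sy by1.
set Sx := \sum_(i < N) _ in sx bx2.
nra.
Qed.

End Grid2.

Section Lim.
Variable R : realType.
Variables (N M : nat) (dx dy : R) (px : 'I_N -> R) (py : 'I_M -> R)
          (Qx : 'M[R]_N) (Qy : 'M[R]_M).

Definition mlim (F : set_system R) (A : R -> 'M[R]_(N, M)) (A0 : 'M[R]_(N, M)) :=
  forall i j, (fun s => A s i j) @ F --> A0 i j.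

Lemma cvg_sumf (F : set_system R) {FF : Filter F} (I : finType) (f : I -> R -> R) (l : I -> R) :
  (forall i, f i @ F --> l i) -> (fun s => \sum_i f i s) @ F --> \sum_i l i.
Proof.
move=> h; apply: cvg_big => //.
exact: add_continuous.
Qed.

Lemma mlim_ip (F : set_system R) {FF : Filter F} A B A0 B0 :
  mlim F A A0 -> mlim F B B0 ->
  (fun s => ipP dx dy px py (A s) (B s)) @ F --> ipP dx dy px py A0 B0.
Proof.
move=> hA hB; rewrite /ipP; apply: cvg_sumf => i; apply: cvg_sumf => j.
apply: cvgM => //; apply: cvgMl_tmp; exact: hA.
Qed.

Lemma mlim_ddx (F : set_system R) {FF : Filter F} A A0 :
  mlim F A A0 -> mlim F (fun s => ddx dx px Qx (A s)) (ddx dx px Qx A0).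
Proof.
move=> hA i j; rewrite /ddx.
have -> : (fun s => (Dx dx px Qx *m A s) i j) = (fun s => \sum_k Dx dx px Qx i k * A s k j).
  by apply/funext => s; rewrite mxE.
rewrite mxE; apply: cvg_sumf => k; apply: cvgMl_tmp; exact: hA.
Qed.

Lemma mlim_ddy (F : set_system R) {FF : Filter F} A A0 :
  mlim F A A0 -> mlim F (fun s => ddy dy py Qy (A s)) (ddy dy py Qy A0).
Proof.
move=> hA i j; rewrite /ddy.
have -> : (fun s => (A s *m (Dy dy py Qy)^T) i j) = (fun s => \sum_k A s i k * (Dy dy py Qy)^T k j).
  by apply/funext => s; rewrite mxE.
rewrite mxE; apply: cvg_sumf => k; apply: cvgMr_tmp; exact: hA.
Qed.

Lemma msubE (X Y : 'M[R]_(N, M)) i j : (X - Y) i j = X i j - Y i j.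
Proof. by rewrite !mxE. Qed.

Lemma mlim_curl (F : set_system R) {FF : Filter F} A B A0 B0 :
  mlim F A A0 -> mlim F B B0 ->
  mlim F (fun s => curl dx dy px py Qx Qy (A s) (B s)) (curl dx dy px py Qx Qy A0 B0).
Proof.
move=> hA hB i j; rewrite /curl.
have -> : (fun s => (ddx dx px Qx (B s) - ddy dy py Qy (A s)) i j) =
   (fun s => ddx dx px Qx (B s) i j - ddy dy py Qy (A s) i j).
  by apply/funext => s; rewrite msubE.
rewrite msubE; apply: cvgB; [exact: mlim_ddx | exact: mlim_ddy].
Qed.

Lemma is_derive_sumf (n : nat) (f : 'I_n -> R -> R) (df : 'I_n -> R) (x : R) :
  (forall i, is_derive x 1 (f i) (df i)) ->
  is_derive x 1 (fun s => \sum_i f i s) (\sum_i df i).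
Proof.
by move=> h; rewrite -fct_sumE; apply: is_derive_sum.
Qed.

Lemma is_derive_sqw (k : R) (f : R -> R) (x : R) df : is_derive x 1 f df ->
  is_derive x 1 (fun s => k * f s * f s) (2 * k * f x * df).
Proof.
move=> h.
have h2 := is_deriveZ k (is_deriveM h h).
have -> : (fun s => k * f s * f s) = k \*: (f * f).
  by apply/funext => s /=; rewrite -mulrA.
apply: (is_derive_eq h2); rewrite /GRing.scale /=; ring.
Qed.

Lemma is_derive_ipsq (A : R -> 'M[R]_(N, M)) (dA : 'M[R]_(N, M)) (x : R) :
  (forall i j, is_derive x 1 (fun s => A s i j) (dA i j)) ->
  is_derive x 1 (fun s => ipP dx dy px py (A s) (A s)) (2 * ipP dx dy px py (A x) dA).
Proof.
move=> h; rewrite /ipP mulr_sumr; apply: is_derive_sumf => i.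
rewrite mulr_sumr; apply: is_derive_sumf => j.
have := @is_derive_sqw (dx * px i * (dy * py j)) _ x _ (h i j).
by move/is_derive_eq; apply; ring.
Qed.

Lemma is_derive_expaff (c t x : R) :
  is_derive x 1 (fun s => expR (c * (t - s))) (- c * expR (c * (t - x))).
Proof.
have ha : is_derive x 1 (fun s : R => c * (t - s)) (- c).
  have h := is_deriveZ c (is_deriveB (is_derive_cst t x 1) (is_derive_id x 1)).
  have -> : (fun s : R => c * (t - s)) = c \*: (cst t - id) by apply/funext.
  by apply: (is_derive_eq h); rewrite /GRing.scale /=; ring.
have dcomp : derivable (expR \o (fun s => c * (t - s))) x 1.
  apply/derivable1_diffP; apply: differentiable_comp.
    by apply/derivable1_diffP; exact: (@ex_derive _ _ _ _ _ _ _ ha).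
  apply/derivable1_diffP; exact: (@ex_derive _ _ _ _ _ _ _ (is_derive_expR _)).
have := derivableP dcomp.
rewrite -derive1E derive1_comp; last 2 first.
  exact: (@ex_derive _ _ _ _ _ _ _ ha).
  exact: (@ex_derive _ _ _ _ _ _ _ (is_derive_expR _)).
rewrite !derive1E !derive_val => h.
by apply: (is_derive_eq h); rewrite mulrC.
Qed.


End Lim.
Arguments mlim {R N M}.

Theorem theorem3p5 (R : realType) :
  exists F : R -> R -> R -> R,
  forall (eps : R) (u1 u2 : R -> R -> R)
         (N M : nat) (dx dy : R) (px : 'I_N -> R) (py : 'I_M -> R)
         (Qx : 'M[R]_N) (Qy : 'M[R]_M) (C0 : R)
         (sL sR sD sU : 'I_N -> 'I_M -> R)
         (Lu Ld : R) (V1 V2 : R -> 'M[R]_(N, M)),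
  0 < eps ->
  smooth2 u1 -> smooth2 u2 ->
  0 < dx -> 0 < dy ->
  (N.-1)%:R * dx = 1 -> (M.-1)%:R * dy = 1 ->
  SBP px Qx -> SBP py Qy ->
  commutator_bound dx px Qx C0 -> commutator_bound dy py Qy C0 ->
  (* penalty conditions *)
  (forall (i : 'I_N) (j : 'I_M), (i : nat) = N.-1 ->
      sR i j <= Num.min (u1 1 (j%:R * dy)) 0 / 2) ->
  (forall (i : 'I_N) (j : 'I_M), (i : nat) = 0%N ->
      sL i j <= - (Num.max (u1 0 (j%:R * dy)) 0 / 2)) ->
  (forall (i : 'I_N) (j : 'I_M), (j : nat) = M.-1 ->
      sU i j <= Num.min (u2 (i%:R * dx) 1) 0 / 2) ->
  (forall (i : 'I_N) (j : 'I_M), (j : nat) = 0%N ->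
      sD i j <= - (Num.max (u2 (i%:R * dx) 0) 0 / 2)) ->
  (* Lu bounds the derivatives of u1, u2 on [0,1]^2 *)
  (forall x y, 0 <= x <= 1 -> 0 <= y <= 1 ->
     [/\ `|pdx u1 x y| <= Lu, `|pdy u1 x y| <= Lu,
         `|pdx u2 x y| <= Lu & `|pdy u2 x y| <= Lu]) ->
  (* Ld bounds the discrete derivatives of u1, u2 (the entries of C) *)
  (forall (i : 'I_N) (j : 'I_M),
     [/\ `|ddx dx px Qx (restr dx dy u1) i j| <= Ld,
         `|ddy dy py Qy (restr dx dy u1) i j| <= Ld,
         `|ddx dx px Qx (restr dx dy u2) i j| <= Ld &
         `|ddy dy py Qy (restr dx dy u2) i j| <= Ld]) ->
  (* V is a solution: continuous from the right at 0, differentiable for t > 0 *)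
  (forall i j, (fun s => V1 s i j) @ 0^'+ --> V1 0 i j) ->
  (forall i j, (fun s => V2 s i j) @ 0^'+ --> V2 0 i j) ->
  (forall t, 0 < t -> forall i j,
     derivable (fun s => V1 s i j) t 1 /\ derivable (fun s => V2 s i j) t 1) ->
  (forall t, 0 < t ->
     let U1 := restr dx dy u1 in
     let U2 := restr dx dy u2 in
     let dxx := ddx dx px Qx in
     let dyy := ddy dy py Qy in
     let W1 := V1 t in
     let W2 := V2 t in
     let cu := curl dx dy px py Qx Qy W1 W2 in
     (* C V *)
     let CV1 := - had (dyy U2) W1 + had (dyy U1) W2 in
     let CV2 := had (dxx U2) W1 - had (dxx U1) W2 in
     let B := Bop dx dy px py sL sR sD sU in
     dt V1 t + had U1 (dxx W1) + had U2 (dyy W1) - CV1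
       + eps *: curl2_1 dx dy px py Qx Qy W1 W2
     = B W1 + eps *: (calU (invPy dy py cu) - calD (invPy dy py cu)) /\
     dt V2 t + had U1 (dxx W2) + had U2 (dyy W2) - CV2
       + eps *: curl2_2 dx dy px py Qx Qy W1 W2
     = B W2 - eps *: (calR (invPx dx px cu) - calL (invPx dx px cu))) ->
  let c := F C0 Lu Ld in
  forall t, 0 <= t ->
    normP2 dx dy px py (V1 t) (V2 t)
    + eps * (\int[lebesgue_measure]_(s in `[0, t]%classic)
               (expR (c * (t - s)) *
                ipP dx dy px py (curl dx dy px py Qx Qy (V1 s) (V2 s))
                                (curl dx dy px py Qx Qy (V1 s) (V2 s))))
    <= expR (c * t) * normP2 dx dy px py (V1 0) (V2 0).
Proof.
exists (fun C0 Lu Ld => 2 * C0 * Lu + 4 * Ld).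
move=> eps u1 u2 N M dx dy px py Qx Qy C0 sL sR sD sU Lu Ld V1 V2 he s1 s2 hdx hdy hN hM
  sbx sby cbx cby hR hL hU hD hLu hLd rc1 rc2 dV heq c t.
rewrite le_eqVlt => /predU1P [<-|tp].
  rewrite set_itv1 Rintegral_set1 mulr0 addr0 mulr0 expR0 mul1r.
  exact: lexx.
pose ip := ipP dx dy px py.
pose cu s := curl dx dy px py Qx Qy (V1 s) (V2 s).
pose E s := ip (V1 s) (V1 s) + ip (V2 s) (V2 s).
pose ea s := expR (c * (t - s)).
pose g s := ea s * ip (cu s) (cu s).
pose phi s := ea s * E s.
pose P s := parameterized_integral lebesgue_measure 0 s g.
pose H s := phi s + eps * P s.
have eaD : forall s : R, is_derive s 1 ea (- c * ea s) by move=> s; exact: is_derive_expaff.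
have eaC : forall s : R, ea @ s --> ea s.
  move=> s; apply: differentiable_continuous; apply/derivable1_diffP.
  exact: (@ex_derive _ _ _ _ _ _ _ (eaD s)).
have VD : forall s : R, 0 < s -> forall i j,
    is_derive s 1 (fun r => V1 r i j) (dt V1 s i j) /\
    is_derive s 1 (fun r => V2 r i j) (dt V2 s i j).
  move=> s sp i j; have [d1 d2] := dV s sp i j.
  by rewrite !mxE !derive1E; split; apply: derivableP.
have VC : forall s : R, 0 < s -> mlim (nbhs s) V1 (V1 s) /\ mlim (nbhs s) V2 (V2 s).
  move=> s sp; split=> i j; apply: differentiable_continuous; apply/derivable1_diffP;
    by have [] := dV s sp i j.
have gen : forall (F : set_system R) (FF : Filter F) s0,
    mlim F V1 (V1 s0) -> mlim F V2 (V2 s0) -> ea @ F --> ea s0 ->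
    g @ F --> g s0 /\ phi @ F --> phi s0.
  move=> F FF s0 h1 h2 h3; split.
    apply: cvgM => //; apply: mlim_ip; exact: mlim_curl.
  apply: cvgM => //; apply: cvgD; exact: mlim_ip.
have gC : forall s : R, 0 < s -> g @ s --> g s /\ phi @ s --> phi s.
  move=> s sp; have [h1 h2] := VC s sp; exact: (gen (nbhs s) _ s h1 h2 (eaC s)).
have g0 : g @ 0^'+ --> g 0 /\ phi @ 0^'+ --> phi 0.
  apply: (gen _ _ 0 rc1 rc2); exact: cvg_at_right_filter.
have gcont : {within `[0, t], continuous g}.
  apply/continuous_within_itvP => //; split.
  - by move=> s; rewrite in_itv /= => /andP[s0 _]; case: (gC s s0).
  - by case: g0.
  - by apply: cvg_at_left_filter; case: (gC t tp).
have gint : lebesgue_measure.-integrable `[0, t] (EFin \o g).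
  by apply: continuous_compact_integrable => //; exact: segment_compact.
have Pcont : {within `[0, t], continuous P}.
  exact: parameterized_integral_continuous (ltW tp) gint.
have Pder : forall s : R, 0 < s < t -> derivable P s 1 /\ derive1 P s = g s.
  move=> s /andP[s0 st].
  apply: (@continuous_FTC1_closed _ g 0 s t) => //.
  by case: (gC s s0).
have ED : forall s : R, 0 < s ->
    is_derive s 1 E (2 * ip (V1 s) (dt V1 s) + 2 * ip (V2 s) (dt V2 s)).
  move=> s sp.
  have h1 : is_derive s 1 (fun r => ip (V1 r) (V1 r)) (2 * ip (V1 s) (dt V1 s)).
    by apply: is_derive_ipsq => i j; case: (VD s sp i j).
  have h2 : is_derive s 1 (fun r => ip (V2 r) (V2 r)) (2 * ip (V2 s) (dt V2 s)).
    by apply: is_derive_ipsq => i j; case: (VD s sp i j).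
  exact: is_deriveD h1 h2.
have Hder : forall s : R, 0 < s < t -> is_derive s 1 H
    (ea s *: (2 * ip (V1 s) (dt V1 s) + 2 * ip (V2 s) (dt V2 s)) + E s *: (- c * ea s)
      + eps *: g s).
  move=> s /andP[s0 st].
  have hp := is_deriveM (eaD s) (ED s s0).
  have [dP vP] := Pder s (andb_true_intro (conj s0 st)).
  have hP := derivableP dP; rewrite -derive1E vP in hP.
  exact: is_deriveD hp (is_deriveZ eps hP).
have Hle : forall s : R, 0 < s < t -> derive1 H s <= 0.
  move=> s hs; have hd := Hder s hs; rewrite derive1E derive_val.
  case/andP: hs => s0 st.
  have [eq1 eq2] := heq s s0.
  have en0 := @energy R N M dx dy px py Qx Qy hdx hdy sbx sby eps u1 u2 C0 sL sR sD sU Lu Ld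
     (V1 s) (V2 s) (dt V1 s) (dt V2 s) s1 s2 hN hM cbx cby hR hL hU hD hLu hLd eq1 eq2.
  have en : 2 * (ip (V1 s) (dt V1 s) + ip (V2 s) (dt V2 s)) <=
      c * E s - 2 * eps * ip (cu s) (cu s).
    exact: en0.
  have eap : 0 < ea s by exact: expR_gt0.
  have cc0 : 0 <= ip (cu s) (cu s).
    rewrite /ip /ipP; apply: sumr_ge0 => i _; apply: sumr_ge0 => j _.
    have wp : 0 < dx * px i * (dy * py j) by rewrite !mulr_gt0 // ?(proj1 sbx) ?(proj1 sby).
    have := mulr_ge0 (ltW wp) (sqr_ge0 (cu s i j)); move=> hh; apply: (le_trans hh); rewrite le_eqVlt; apply/orP; left; apply/eqP; ring.
  rewrite /GRing.scale /= /g.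
  set dE := ip (V1 s) (dt V1 s) + ip (V2 s) (dt V2 s) in en *.
  have k1 : 0 <= ea s * (c * E s - 2 * eps * ip (cu s) (cu s) - 2 * dE).
    by rewrite mulr_ge0 ?(ltW eap) // subr_ge0.
  have k2 : 0 <= eps * (ea s * ip (cu s) (cu s)) by rewrite !mulr_ge0 ?(ltW eap) ?(ltW he).
  have -> : 2 * ip (V1 s) (dt V1 s) + 2 * ip (V2 s) (dt V2 s) = 2 * dE by rewrite /dE; ring.
  nra.
have [_ Pr Pl] := (continuous_within_itvP P tp).1 Pcont.
have Hcont : {within `[0, t], continuous H}.
  apply/continuous_within_itvP => //; split.
  - move=> s; rewrite in_itv /= => hs.
    apply: differentiable_continuous; apply/derivable1_diffP.
    exact: (@ex_derive _ _ _ _ _ _ _ (Hder s hs)).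
  - apply: cvgD; first by case: g0.
    exact: cvgMl_tmp.
  - apply: cvgD; first by apply: cvg_at_left_filter; case: (gC t tp).
    exact: cvgMl_tmp.
have hd1 : forall s, s \in `]0, t[%R -> derivable H s 1.
  move=> s; rewrite in_itv /= => hs; exact: (@ex_derive _ _ _ _ _ _ _ (Hder s hs)).
have hd2 : forall s, s \in `]0, t[%R -> H^`()%classic s <= 0.
  by move=> s; rewrite in_itv /= => hs; exact: Hle.
have mono := @ler0_derive1_nincr R H 0 t hd1 hd2 Hcont 0 t (lexx 0) (ltW tp) (lexx t).
have HT : H t = normP2 dx dy px py (V1 t) (V2 t) + eps *
   (\int[lebesgue_measure]_(s in `[0, t]%classic) (expR (c * (t - s)) *
      ipP dx dy px py (curl dx dy px py Qx Qy (V1 s) (V2 s))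
                      (curl dx dy px py Qx Qy (V1 s) (V2 s)))).
  by rewrite /H /phi /ea subrr mulr0 expR0 mul1r.
have H0 : H 0 = expR (c * t) * normP2 dx dy px py (V1 0) (V2 0).
  by rewrite /H /phi /ea /P /parameterized_integral set_itv1 Rintegral_set1 mulr0 addr0 subr0.
by rewrite -HT -H0.
Qed.
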